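(* Given a dynamic search tree $\overline{\mathcal{T}}_S$ (with $\Theta(\beta)$ elements per leaf) with an implementation of $\mathsf{Insert}$ taking $T_{\mathsf{Insert}}$ time, the $\mathsf{InsertIbltTree}$ operation takes $O(T_{\mathsf{Insert}}+\Delta_L\beta+\Delta_I c\delta)$ time, where $\Delta_L$ and $\Delta_I$ are the numbers of leaf and internal nodes whose sets of blocks change due to the insertion, and $c$ is the number of children per internal node.
   Context: An IBLT (Invertible Bloom Lookup Table) here has $O(\delta)$ cells holding XOR-sums of keys, values and tags of the triples hashed to them; inserting a triple costs $O(1)$ and combining two IBLTs (cellwise XOR) costs $O(\delta)$. The IBLT tree over a dynamic search tree $\overline{\mathcal{T}}_S$ on a set $S$ of key-value-tag triples with $\Theta(\beta)$ triples per leaf stores at every node an IBLT of the triples in its subtree (leaf IBLTs built from their triples; internal IBLTs as the combination of the children's IBLTs plus the node's own triple). $\mathsf{InsertIbltTree}(k,v,t)$ performs $\mathsf{Insert}$ on $\overline{\mathcal{T}}_S$, tracks the nodes whose subtree contents change, and recomputes each such node's IBLT (leaves from their triples, internal nodes by combining their children's IBLTs). *)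

(* Defs.v *)
From mathcomp Require Import all_boot all_order all_algebra.
Set Implicit Arguments. Unset Strict Implicit. Unset Printing Implicit Defensive.
Import GRing.Theory.
Local Open Scope ring_scope.

(* Keys, values and tags live in zmodTypes; the group addition plays the role
   of XOR (for bit strings, XOR is exactly the addition of 'F_2^w). *)
Definition triple (Key Val Tag : zmodType) : zmodType := (Key * Val * Tag)%type.

(* An IBLT with m cells; each cell holds the sum of the (key,value,tag)
   triples hashed to it.  hs is the (constant-size) list of hash functions. *)
Definition iblt (Key Val Tag : zmodType) (m : nat) := {ffun 'I_m -> triple Key Val Tag}.

Definition iblt0 (Key Val Tag : zmodType) (m : nat) : iblt Key Val Tag m :=
  [ffun => 0].

Definition iblt_ins (Key Val Tag : zmodType) (m : nat)
  (hs : seq (Key -> 'I_m)) (B : iblt Key Val Tag m) (t : triple Key Val Tag)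
  : iblt Key Val Tag m :=
  [ffun i => B i + \sum_(h <- hs | h t.1.1 == i) t].

Definition iblt_comb (Key Val Tag : zmodType) (m : nat)
  (B1 B2 : iblt Key Val Tag m) : iblt Key Val Tag m :=
  [ffun i => B1 i + B2 i].

(* Cost model (unit = elementary step):
   inserting a triple into an IBLT costs 1   (O(1) in the paper),
   combining two IBLTs costs m (the number of cells, m = O(delta)),
   visiting a node of the tree costs 1. *)

(* IBLT tree: a search tree over triples, leaves carry their triples, internal
   nodes carry their own triple and children; every node carries an IBLT. *)
Inductive atree (Tr I : Type) :=
| ALeaf of seq Tr & I
| ANode of Tr & seq (atree Tr I) & I.

Definition annot (Tr I : Type) (a : atree Tr I) : I :=
  match a with ALeaf _ B => B | ANode _ _ B => B end.

(* Result of Insert on the underlying search tree, with tracking of the nodes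
   whose subtree contents changed:
   IKeep a    : a subtree whose contents did not change (reused with its IBLT);
   ILeaf ts   : a leaf whose set of triples changed (or a new leaf);
   INode x ch : an internal node whose subtree contents changed (or new). *)
Inductive itree (Tr I : Type) :=
| IKeep of atree Tr I
| ILeaf of seq Tr
| INode of Tr & seq (itree Tr I).

Fixpoint nchanged_leaves (Tr I : Type) (t : itree Tr I) : nat :=
  match t with
  | IKeep _ => 0
  | ILeaf _ => 1
  | INode _ ch => sumn (map (@nchanged_leaves Tr I) ch)
  end%N.

Fixpoint nchanged_internal (Tr I : Type) (t : itree Tr I) : nat :=
  match t with
  | IKeep _ => 0
  | ILeaf _ => 0
  | INode _ ch => (sumn (map (@nchanged_internal Tr I) ch)).+1
  end%N.

Fixpoint leaves_le (Tr I : Type) (b : nat) (t : itree Tr I) : bool :=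
  match t with
  | IKeep _ => true
  | ILeaf ts => (size ts <= b)%N
  | INode _ ch => all (@leaves_le Tr I b) ch
  end.

Fixpoint arity_le (Tr I : Type) (c : nat) (t : itree Tr I) : bool :=
  match t with
  | IKeep _ => true
  | ILeaf _ => true
  | INode _ ch => (size ch <= c)%N && all (@arity_le Tr I c) ch
  end.

Fixpoint rebuild (Key Val Tag : zmodType) (m : nat) (hs : seq (Key -> 'I_m))
  (t : itree (triple Key Val Tag) (iblt Key Val Tag m))
  : atree (triple Key Val Tag) (iblt Key Val Tag m) * nat :=
  match t with
  | IKeep a => (a, 1%N)
  | ILeaf ts =>
      (ALeaf ts (foldr (fun x B => iblt_ins hs B x) (iblt0 Key Val Tag m) ts),
       (1 + size ts)%N)
  | INode x ch =>
      let rs := map (@rebuild Key Val Tag m hs) ch in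
      let B := foldr (fun r B => iblt_comb (annot r.1) B) (iblt0 Key Val Tag m) rs in
      (ANode x (map fst rs) (iblt_ins hs B x),
       (1 + size ch * m + 1 + sumn (map snd rs))%N)
  end.

(* InsertIbltTree: run Insert (which returns the tracked result together with
   its running time), then recompute the IBLTs of the changed nodes. *)
Definition InsertIbltTree (Key Val Tag : zmodType) (m : nat) (hs : seq (Key -> 'I_m))
  (ins : atree (triple Key Val Tag) (iblt Key Val Tag m) -> triple Key Val Tag ->
         itree (triple Key Val Tag) (iblt Key Val Tag m) * nat)
  (T : atree (triple Key Val Tag) (iblt Key Val Tag m)) (x : triple Key Val Tag)
  : atree (triple Key Val Tag) (iblt Key Val Tag m) * nat :=
  let r := rebuild hs (ins T x).1 in (r.1, ((ins T x).2 + r.2)%N).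

(* Main.v *)
Require Import Defs.
From mathcomp Require Import all_boot all_order all_algebra.
From mathcomp Require Import zify.

Definition itree_ind2 (Tr I : Type) (P : itree Tr I -> Prop)
  (H1 : forall a, P (IKeep a)) (H2 : forall ts, P (ILeaf I ts))
  (H3 : forall x ch, foldr (fun t acc => P t /\ acc) True ch -> P (INode x ch)) :
  forall t, P t :=
  fix F t := match t with
  | IKeep a => H1 a
  | ILeaf ts => H2 ts
  | INode x ch => H3 x ch ((fix G l := match l return foldr (fun t acc => P t /\ acc) True l with
        | nil => Logic.I | t :: l => conj (F t) (G l) end) ch)
  end.

Lemma cost_bound (A D : nat) (Key Val Tag : zmodType) (m beta c delta : nat)
    (hs : seq (Key -> 'I_m)) :
    (0 < c)%N -> (0 < delta)%N -> (m <= D * delta)%N ->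
    forall t : itree (triple Key Val Tag) (iblt Key Val Tag m),
    leaves_le (A * beta) t -> arity_le c t ->
    ((rebuild hs t).2 <= 1 + (A + D + 2) * (nchanged_leaves t * beta
        + nchanged_internal t * c * delta))%N.
Proof.
move=> c0 d0 mD.
set K := (A + D + 2)%N.
elim/itree_ind2 => [a|ts|x ch IH] /=.
- by [].
- move=> H _. rewrite mul1n; nia.
- move=> Hl /andP[Hs Ha].
  have aux : (sumn (map snd (map (rebuild hs) ch)) <= size ch +
      K * (sumn (map (@nchanged_leaves _ _) ch) * beta
         + sumn (map (@nchanged_internal _ _) ch) * c * delta))%N.
  { elim: ch IH Hl Ha {Hs} => [|t ch IHc] //= [Ht IH] /andP[Hl1 Hl] /andP[Ha1 Ha].
    have := Ht Hl1 Ha1. have := IHc IH Hl Ha.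
    move: (sumn _) (sumn (map (@nchanged_leaves _ _) ch)) (sumn (map (@nchanged_internal _ _) ch)) (rebuild hs t).2 (nchanged_leaves t) (nchanged_internal t) => S Ls Is r l i.
    rewrite !mulnDl -!mulnA.
    move: (Ls * beta)%N (Is * (c * delta))%N (l * beta)%N (i * (c * delta))%N => X Y x1 y1.
    rewrite !mulnDr. move: (K * X)%N (K * Y)%N (K * x1)%N (K*y1)%N => _ _ _ _. set n := size ch. lia. }
  have h1 : (size ch * m <= c * (D * delta))%N by apply: leq_mul.
  have h2 : (1 <= c * delta)%N by rewrite muln_gt0 c0 d0.
  have h3 : (size ch <= c * delta)%N by apply: leq_trans Hs _; rewrite leq_pmulr.
  rewrite mulnCA in h1.
  move: aux h1 h2 h3.
  move: (sumn _) (sumn (map (@nchanged_leaves _ _) ch)) (sumn (map (@nchanged_internal _ _) ch)) => S Ls Is.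
  rewrite mulSn mulnDl -!mulnA.
  move: (c * delta)%N => Z. move: (Ls * beta)%N (Is * Z)%N => X Y.
  rewrite !mulnDr. move: (K * X)%N (K * Y)%N => KX KY.
  set n := size ch. rewrite /K. move: (n * m)%N => nm. nia.
Qed.

Theorem lemma9 :
  forall (A D : nat), exists K : nat,
  forall (Key Val Tag : zmodType) (m beta c delta : nat)
    (hs : seq (Key -> 'I_m))
    (ins : atree (triple Key Val Tag) (iblt Key Val Tag m) -> triple Key Val Tag ->
           itree (triple Key Val Tag) (iblt Key Val Tag m) * nat)
    (T : atree (triple Key Val Tag) (iblt Key Val Tag m)) (x : triple Key Val Tag),
    (0 < beta)%N -> (0 < c)%N -> (0 < delta)%N -> (m <= D * delta)%N ->
    (0 < (ins T x).2)%N ->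
    leaves_le (A * beta) (ins T x).1 ->
    arity_le c (ins T x).1 ->
    ((InsertIbltTree hs ins T x).2 <=
       K * ((ins T x).2 + nchanged_leaves (ins T x).1 * beta
            + nchanged_internal (ins T x).1 * c * delta))%N.
Proof.
move=> A D; exists (A + D + 4)%N => Key Val Tag m beta c delta hs ins T x b0 c0 d0 mD i0 Hl Ha.
have := @cost_bound A D Key Val Tag m beta c delta hs c0 d0 mD _ Hl Ha.
rewrite /InsertIbltTree /=.
move: (rebuild hs (ins T x).1).2 (ins T x).2 i0 (nchanged_leaves (ins T x).1 * beta)%N
  (nchanged_internal (ins T x).1 * c * delta)%N => r i i0 L J H.
nia.
Qed.
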